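(* Let $p$ be an odd prime, $\gamma>0$, $H\in\mathbb{Z}_p^{l\times n}$ and $c\in\mathbb{Z}_p^l$ independent and uniform, $\Lambda_o=\gamma(\{v\in\mathbb{Z}_p^n:Hv=c\}-\frac{p-1}{2})$, and $S'=[-\frac{\gamma p}{2},\frac{\gamma p}{2}]^n\cap\gamma\mathbb{Z}^n$. Let $(X,\hat U)$ be jointly distributed, with $\hat U$ taking values in $\gamma(\{0,\dots,p-1\}-\frac{p-1}{2})$, fix $\epsilon>0$ and $x\in\mathbb{R}^n$, and let $\theta(x)=\sum_{u\in\Lambda_o}\mathbb{1}\{u\in A_\epsilon^n(\hat U|x)\}$. Let $Z^n$ be uniform on $S'$. Then $$\Big(1-\frac1{p^{n-l}}\Big)p^{n-l}\Pr\big(Z^n\in A_\epsilon^n(\hat U|x)\big)\le\mathbb{E}\{\theta(x)\}\le p^{n-l}\Pr\big(Z^n\in A_\epsilon^n(\hat U|x)\big)+\frac{2^l}{p^{n(l-1)}}.$$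
   Context: Weak* typicality: the Prokhorov distance is $\pi_d(P_1,P_2)=\inf\{\epsilon>0:P_1(A)<P_2(A^\epsilon)+\epsilon\text{ and }P_2(A)<P_1(A^\epsilon)+\epsilon\ \forall\text{ Borel }A\subseteq\mathbb{R}^d\}$, $A^\epsilon=\{z:\exists y\in A,\|z-y\|<\epsilon\}$. The joint empirical measure of $(x,u)\in\mathbb{R}^n\times\mathbb{R}^n$ is $\bar P_{xu}(A\times B)=\frac1n\sum_i\mathbb{1}\{x_i\in A,u_i\in B\}$, and $A_\epsilon^n(\hat U|x)=\{u\in\mathbb{R}^n:\pi_2(\bar P_{xu},P_{X\hat U})<\epsilon\}$. Elements of $\mathbb{Z}_p$ are identified with $\{0,\dots,p-1\}$. *)

(* Defs.v *)
From mathcomp Require Import all_boot all_algebra.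
From Stdlib Require Import Reals ClassicalEpsilon ClassicalDescription List.

Unset Printing Implicit Defensive.

Local Open Scope R_scope.

(* Infimum of a set of reals (taken as - sup of the negated set;
   arbitrary value if the set is empty or unbounded below). *)
Definition Rinf (S : R -> Prop) : R :=
  epsilon (inhabits 0) (fun m => is_lub (fun y => S (- y)) (- m)).

(* Cardinality of a finite subset of an arbitrary type (arbitrary if infinite). *)
Definition card_set (T : Type) (S : T -> Prop) : nat :=
  epsilon (inhabits 0%nat)
    (fun k => exists l : list T, NoDup l /\ (forall z, S z <-> In z l) /\ length l = k).

Arguments card_set {T} S.

Definition ind (P : Prop) : R :=
  if excluded_middle_informative P then 1 else 0.

Definition fsum (T : finType) (f : T -> R) : R := \big[Rplus/0]_(t : T) f t.

Arguments fsum {T} f.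

Definition R2 := (R * R)%type.

Definition dist2 (z y : R2) : R :=
  sqrt ((fst z - fst y) * (fst z - fst y) + (snd z - snd y) * (snd z - snd y)).

Definition open2 (A : R2 -> Prop) : Prop :=
  forall z, A z -> exists r, 0 < r /\ forall w, dist2 w z < r -> A w.

Inductive borel2 : (R2 -> Prop) -> Prop :=
  | borel2_open : forall A, open2 A -> borel2 A
  | borel2_compl : forall A, borel2 A -> borel2 (fun z => ~ A z)
  | borel2_cunion : forall F : nat -> R2 -> Prop,
      (forall k, borel2 (F k)) -> borel2 (fun z => exists k, F k z).

(* P is a (Borel) probability measure on R^2 (only its values on Borel sets matter). *)
Definition prob_measure2 (P : (R2 -> Prop) -> R) : Prop :=
  P (fun _ => True) = 1 /\
  (forall A, borel2 A -> 0 <= P A) /\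
  (forall F : nat -> R2 -> Prop,
      (forall k, borel2 (F k)) ->
      (forall i j z, i <> j -> F i z -> F j z -> False) ->
      infinite_sum (fun k => P (F k)) (P (fun z => exists k, F k z))).

Definition nbhd2 (A : R2 -> Prop) (eps : R) : R2 -> Prop :=
  fun z => exists y, A y /\ dist2 z y < eps.

Definition prokhorov2 (P1 P2 : (R2 -> Prop) -> R) : R :=
  Rinf (fun eps => 0 < eps /\
     forall A, borel2 A ->
       P1 A < P2 (nbhd2 A eps) + eps /\ P2 A < P1 (nbhd2 A eps) + eps).

Definition emp_meas (n : nat) (x u : 'I_n -> R) (A : R2 -> Prop) : R :=
  / INR n * fsum (fun i : 'I_n => ind (A (x i, u i))).

Definition typset (n : nat) (P : (R2 -> Prop) -> R) (eps : R) (x : 'I_n -> R)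
  : ('I_n -> R) -> Prop :=
  fun u => prokhorov2 (emp_meas n x u) P < eps.

(* Lambda_o = gamma ({v in Z_p^n : H v = c} - (p-1)/2), elements of Z_p
   identified with {0,...,p-1}. *)
Definition Lambda_o (p l n : nat) (gamma : R) (H : 'M['Z_p]_(l, n)) (c : 'cV['Z_p]_l)
  : ('I_n -> R) -> Prop :=
  fun u => exists v : 'cV['Z_p]_n, mulmx H v = c /\
     forall i, u i = gamma * (INR (nat_of_ord (v i ord0)) - (INR p - 1) / 2).

Definition theta (p l n : nat) (gamma : R) (H : 'M['Z_p]_(l, n)) (c : 'cV['Z_p]_l)
  (A : ('I_n -> R) -> Prop) : R :=
  INR (card_set (fun u => Lambda_o p l n gamma H c u /\ A u)).

Definition E_theta (p l n : nat) (gamma : R) (A : ('I_n -> R) -> Prop) : R :=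
  / INR #|{: 'M['Z_p]_(l, n) * 'cV['Z_p]_l}| *
  fsum (fun Hc : 'M['Z_p]_(l, n) * 'cV['Z_p]_l => theta p l n gamma Hc.1 Hc.2 A).

Definition Sprime (p n : nat) (gamma : R) : ('I_n -> R) -> Prop :=
  fun z => forall i, (exists k : Z, z i = gamma * IZR k) /\
     - (gamma * INR p / 2) <= z i <= gamma * INR p / 2.

Definition Pr_unif_Sprime (p n : nat) (gamma : R) (A : ('I_n -> R) -> Prop) : R :=
  INR (card_set (fun z => Sprime p n gamma z /\ A z)) / INR (card_set (Sprime p n gamma)).

(* Main.v *)
Require Import Defs.
From mathcomp Require Import all_boot all_algebra.
From Stdlib Require Import Reals ZArith.
From Stdlib Require Import FinFun FunctionalExtensionality ClassicalEpsilon Lra Lia.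
From Stdlib Require List.
From mathcomp Require Import zify.
Local Open Scope R_scope.

Lemma In_mem (T : eqType) (x : T) (s : list T) : List.In x s <-> x \in s.
Proof.
elim: s => [|y s IH] /=; first by split => //.
split; rewrite in_cons.
- case=> [->|/IH ->]; first by rewrite eqxx. by rewrite orbT.
- case/orP=> [/eqP ->|/IH H]; by [left|right].
Qed.

Lemma uniq_NoDup (T : eqType) (s : list T) : uniq s -> List.NoDup s.
Proof.
elim: s => [|y s IH] /=; first by constructor.
case/andP=> Hn Hu; constructor; last exact: IH.
by move/In_mem; rewrite (negbTE Hn).
Qed.

Lemma card_set_list (X : Type) (S : X -> Prop) (l : list X) :
  List.NoDup l -> (forall z, S z <-> List.In z l) -> card_set S = length l.
Proof.
move=> Hl HS; rewrite /card_set.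
have Hex : exists k, exists l0 : list X, List.NoDup l0 /\ (forall z, S z <-> List.In z l0) /\ length l0 = k
  by exists (length l), l.
case: (epsilon_spec (inhabits 0%nat) _ Hex) => lq [Hl' [HS' <-]].
apply/eqP; rewrite eqn_leq; apply/andP; split; apply/leP; apply: List.NoDup_incl_length => //
  => z Hz; [apply/HS; apply/HS'|apply/HS'; apply/HS] => //.
Qed.

Lemma card_set_img (T : finType) (X : Type) (f : T -> X) (Q : pred T) (S : X -> Prop) :
  injective f -> (forall z, S z <-> exists t, Q t /\ z = f t) -> card_set S = #|Q|.
Proof.
move=> Hf HS; rewrite (@card_set_list X S (List.map f (enum Q))).
- by rewrite cardE List.length_map.
- apply: Injective_map_NoDup; first exact: Hf.
  exact/uniq_NoDup/enum_uniq.
- move=> z; rewrite HS; split.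
  + case=> t [Qt ->]; apply: List.in_map; apply/In_mem; by rewrite mem_enum.
  + case/List.in_map_iff=> t [<- /In_mem]; rewrite mem_enum => Qt; by exists t.
Qed.

Definition asb (P : Prop) : bool := if excluded_middle_informative P then true else false.
Lemma asbP P : asb P = true <-> P.
Proof. rewrite /asb; case: excluded_middle_informative => //. Qed.

Lemma INR_sum (I : finType) (F : I -> nat) :
  INR (\sum_(i : I) F i) = \big[Rplus/0]_(i : I) INR (F i).
Proof.
apply: (big_morph INR) => //. move=> a b; exact: plus_INR.
Qed.

Definition phi (p n : nat) (gamma : R) (v : 'cV['Z_p]_n) : 'I_n -> R :=
  fun i => gamma * (INR (nat_of_ord (v i ord0)) - (INR p - 1) / 2).

Lemma phi_inj p n gamma : 0 < gamma -> injective (phi p n gamma).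
Proof.
move=> Hg v w E; apply/matrixP => i j.
have -> : j = ord0 by apply/val_inj; case: j => [[]].
have := f_equal (fun f => f i) E; rewrite /phi => E2.
have E3 : INR (v i ord0) = INR (w i ord0).
  have Hg0 : gamma <> 0 by lra.
  have := Rmult_eq_reg_l _ _ _ E2 Hg0; lra.
by apply/val_inj/INR_eq.
Qed.

Lemma card_Lambda p l n gamma (H : 'M['Z_p]_(l, n)) c (A : ('I_n -> R) -> Prop) :
  0 < gamma ->
  card_set (fun u => Lambda_o p l n gamma H c u /\ A u) =
  #|[pred v | (mulmx H v == c) && asb (A (phi p n gamma v))]|.
Proof.
move=> Hg; apply: card_set_img; first exact: (@phi_inj p n gamma Hg).
move=> z; rewrite /Lambda_o; split.
- case=> [[v [Hv Hz]] Az].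
  have Ez : z = phi p n gamma v by apply: functional_extensionality => i; rewrite Hz.
  exists v; split => //=; rewrite Hv eqxx /=; apply/asbP; by rewrite -Ez.
- case=> v [/andP [/eqP Hv /asbP Av] ->]; split => //; exists v; split => //.
Qed.

Section MkCol.
Local Open Scope ring_scope.
Definition mkcol (T : Type) (n : nat) (f : 'I_n -> T) : 'cV[T]_n := \col_i f i.
Lemma mkcolE (T : Type) (n : nat) (f : 'I_n -> T) i j : mkcol T n f i j = f i.
Proof. by rewrite /mkcol mxE. Qed.
End MkCol.

Lemma half_INR p m : p = (2 * m + 1)%nat -> (INR p - 1) / 2 = INR m.
Proof. move=> ->; rewrite plus_INR mult_INR /=; lra. Qed.

Lemma Sprime_phi p n gamma m : 0 < gamma -> p = (2 * m + 1)%nat -> (1 < p)%nat ->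
  forall z, Sprime p n gamma z <-> exists v, z = phi p n gamma v.
Proof.
move=> Hg Hpm Hp1 z; have Hh := half_INR p m Hpm.
have HpR : INR p = 2 * INR m + 1 by rewrite Hpm plus_INR mult_INR /=; lra.
split.
- move=> HS.
  pose k (i : 'I_n) := epsilon (inhabits 0%Z) (fun k => z i = gamma * IZR k).
  have Hk : forall i, z i = gamma * IZR (k i) /\ (- Z.of_nat m <= k i <= Z.of_nat m)%Z.
    move=> i; case: (HS i) => Hex Hb.
    have Hki : z i = gamma * IZR (k i) by apply: (epsilon_spec (inhabits 0%Z) _ Hex).
    split => //.
    rewrite Hki in Hb; case: Hb => Hb1 Hb2.
    have H1 : IZR (k i) <= INR p / 2.
      apply: (Rmult_le_reg_l gamma) => //; lra.
    have H2 : - (INR p / 2) <= IZR (k i).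
      apply: (Rmult_le_reg_l gamma) => //; lra.
    have H3 : IZR (k i) < IZR (Z.of_nat m + 1).
      rewrite plus_IZR -INR_IZR_INZ; lra.
    have H4 : IZR (- Z.of_nat m - 1) < IZR (k i).
      rewrite minus_IZR opp_IZR -INR_IZR_INZ; lra.
    have := lt_IZR _ _ H3; have := lt_IZR _ _ H4; lia.
  exists (mkcol _ n (fun i => (inord (Z.to_nat (k i + Z.of_nat m)) : 'Z_p))).
  apply: functional_extensionality => i; rewrite /phi mkcolE inordK.
  + rewrite Hh INR_IZR_INZ Z2Nat.id; last by case: (Hk i); lia.
    rewrite plus_IZR -INR_IZR_INZ; case: (Hk i) => -> _; ring.
  + rewrite Zp_cast //; apply/ltP; case: (Hk i) => _ Hb; lia.
- case=> v -> i; rewrite /phi Hh.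
  have Ha : (nat_of_ord (v i ord0) < p)%nat.
    by apply: leq_trans (ltn_ord (v i ord0)) _; rewrite Zp_cast.
  move/ltP: Ha => Ha.
  split.
  + exists (Z.of_nat (v i ord0) - Z.of_nat m)%Z.
    by rewrite minus_IZR -!INR_IZR_INZ.
  + have Ha' : INR (v i ord0) <= 2 * INR m.
      have : (nat_of_ord (v i ord0) <= 2 * m)%coq_nat by lia.
      move/le_INR; rewrite mult_INR /=; lra.
    have Ha0 := pos_INR (v i ord0).
    split; nra.
Qed.
Section SumCount.
Local Open Scope nat_scope.
Lemma sum_count p l n (Q : pred 'cV['Z_p]_n) :
  \sum_(Hc : 'M['Z_p]_(l, n) * 'cV['Z_p]_l) #|[pred v | (mulmx Hc.1 v == Hc.2) && Q v]|
  = (#|Q| * #|{: 'M['Z_p]_(l, n)}|)%nat.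
Proof.
transitivity (\sum_(Hc : 'M['Z_p]_(l, n) * 'cV['Z_p]_l) \sum_(v | Q v) ((mulmx Hc.1 v == Hc.2) : nat)).
  apply: eq_bigr => Hc _; rewrite -sum1_card.
  rewrite (eq_bigl (fun v => (mulmx Hc.1 v == Hc.2) && Q v)); last by move=> v; rewrite inE.
  by rewrite big_mkcondl; apply: eq_bigr => v _; case: (_ == _).
rewrite exchange_big /= -sum_nat_const; apply: eq_big => // v Qv.
rewrite -(pair_big xpredT xpredT (fun H c => ((mulmx H v == c) : nat))) /=.
rewrite -sum1_card; apply: eq_bigr => H _.
rewrite (bigD1 (mulmx H v)) //= eqxx big1 // => c /negbTE.
by rewrite eq_sym => ->.
Qed.
End SumCount.

Lemma expn_pow (a k : nat) : expn a k = Nat.pow a k.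
Proof. elim: k => [|k IH] //=; by rewrite expnS IH. Qed.

Lemma card_cV p k : (1 < p)%nat -> #|{: 'cV['Z_p]_k}| = (p ^ k)%nat.
Proof.
move=> Hp; rewrite card_mx muln1 -expn_pow; congr (expn _ _).
rewrite -[RHS](Zp_cast Hp); exact: card_ord.
Qed.

Theorem mainTheorem14 (p l n : nat) (gamma eps : R) (P_XU : (R2 -> Prop) -> R)
  (x : 'I_n -> R) :
  prime p -> p <> 2%nat -> (0 < n)%nat -> 0 < gamma -> 0 < eps ->
  prob_measure2 P_XU ->
  (* U^ takes values in gamma({0,...,p-1} - (p-1)/2) *)
  P_XU (fun z => exists k : 'I_p, snd z = gamma * (INR (nat_of_ord k) - (INR p - 1) / 2)) = 1 ->
  let A := typset n P_XU eps x in
  let pnl := powerRZ (INR p) (Z.of_nat n - Z.of_nat l) in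
  (1 - / pnl) * pnl * Pr_unif_Sprime p n gamma A <= E_theta p l n gamma A /\
  E_theta p l n gamma A <=
    pnl * Pr_unif_Sprime p n gamma A
    + 2 ^ l / powerRZ (INR p) (Z.of_nat n * (Z.of_nat l - 1)).
Proof.
move=> Hp Hp2 Hn Hg He Hpm HU A pnl.
have Hp1 : (1 < p)%nat by apply: prime_gt1.
have [m Hm] : exists m, p = (2 * m + 1)%nat.
  case: (even_prime Hp) => // Ho; exists p./2.
  have := odd_double_half p; rewrite Ho -mul2n; lia.
pose Q := fun v => asb (A (phi p n gamma v)).
have cPr : card_set (fun z => Sprime p n gamma z /\ A z) = #|Q|.
  apply: card_set_img; first exact: (@phi_inj p n gamma Hg).
  move=> z; rewrite (Sprime_phi p n gamma m Hg Hm Hp1); split.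
  - case=> [[v ->] Az]; exists v; split => //; exact/asbP.
  - case=> v [/asbP Av ->]; split => //; by exists v.
have cS : card_set (Sprime p n gamma) = (p ^ n)%nat.
  rewrite -(card_cV p n Hp1).
  apply: card_set_img; first exact: (@phi_inj p n gamma Hg).
  move=> z; rewrite (Sprime_phi p n gamma m Hg Hm Hp1); split.
  - case=> v ->; by exists v.
  - case=> v [_ ->]; by exists v.
have Eth : E_theta p l n gamma A = INR #|Q| / INR (p ^ l).
  rewrite /E_theta /fsum /theta.
  rewrite (eq_bigr (fun Hc : 'M['Z_p]_(l, n) * 'cV['Z_p]_l =>
      INR #|[pred v | (mulmx Hc.1 v == Hc.2) && Q v]|)); last first.
    move=> Hc _; by rewrite card_Lambda.
  rewrite -INR_sum sum_count card_prod card_cV // mult_INR mult_INR.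
  have H1 : 0 < INR #|{: 'M['Z_p]_(l, n)}|.
    apply: lt_0_INR; apply/ltP; apply/card_gt0P; by exists (const_mx (ord0 : 'Z_p)).
  have H2 : 0 < INR (p ^ l).
    rewrite pow_INR; apply: pow_lt; apply: lt_0_INR; apply/ltP; lia.
  have key : forall a b q, 0 < a -> 0 < b -> / (a * b) * (q * a) = q / b.
    move=> a b q Ha Hb; field; lra.
  exact: (key _ _ _ H1 H2).
have Pr : Pr_unif_Sprime p n gamma A = INR #|Q| / INR (p ^ n).
  by rewrite /Pr_unif_Sprime cPr cS.
have Hp0 : 0 < INR p by apply: lt_0_INR; apply/ltP; lia.
have Hpnl : pnl * INR (p ^ l) = INR (p ^ n).
  rewrite !pow_INR !pow_powerRZ /pnl -powerRZ_add; last lra.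
  by rewrite Z.sub_add.
have Hpl : 0 < INR (p ^ l) by rewrite pow_INR; apply: pow_lt.
have Hpn : 0 < INR (p ^ n) by rewrite pow_INR; apply: pow_lt.
have Hq : 0 <= INR #|Q| by apply: pos_INR.
have Hpnl0 : 0 < pnl by apply: powerRZ_lt.
have Eq : E_theta p l n gamma A = pnl * Pr_unif_Sprime p n gamma A.
  rewrite Eth Pr -Hpnl; field; lra.
have HPr : 0 <= Pr_unif_Sprime p n gamma A.
  rewrite Pr; apply: Rmult_le_pos => //; apply/Rlt_le/Rinv_0_lt_compat => //.
have Hr : 0 <= 2 ^ l / powerRZ (INR p) (Z.of_nat n * (Z.of_nat l - 1)).
  apply: Rmult_le_pos; first by apply/pow_le; lra.
  by apply/Rlt_le/Rinv_0_lt_compat/powerRZ_lt.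
rewrite Eq; split; last lra.
have -> : (1 - / pnl) * pnl = pnl - 1 by field; lra.
nra.
Qed.
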